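(* Let $k\ge1$ be an integer. If $k$ is even, then $A(3k,k)$ is nonsingular, i.e. $N(3k,k)=0$. If $k\equiv1\pmod4$ then $N(3k,k)=1$, and if $k\equiv3\pmod4$ then $N(3k,k)=3$.
   Context: For $n>k\ge1$, $A(n,k)$ is the $n\times n$ skew-symmetric Toeplitz matrix whose first $k$ superdiagonals have all entries $1$ and whose remaining superdiagonals have all entries $0$, and $N(n,k)$ is its nullity. *)

(* Defs.v *)
From mathcomp Require Import all_boot all_order all_algebra.
Set Implicit Arguments. Unset Strict Implicit. Unset Printing Implicit Defensive.
Import GRing.Theory Num.Theory.
Local Open Scope ring_scope.

Definition Amat (n k : nat) : 'M[rat]_n :=
  \matrix_(i < n, j < n)
    if ((i < j) && (j <= i + k))%N then 1
    else if ((j < i) && (i <= j + k))%N then -1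
    else 0.

Definition Nnull (n k : nat) : nat := (n - \rank (Amat n k))%N.

(* Main.v *)
Require Import Defs.
From mathcomp Require Import all_boot all_order all_algebra.
From mathcomp Require Import zify ring lra.
Set Implicit Arguments. Unset Strict Implicit. Unset Printing Implicit Defensive.
Import GRing.Theory Num.Theory.
Local Open Scope ring_scope.


Definition Pf n (u : 'rV[rat]_n) (t : nat) : rat :=
  \sum_(i < n) (if (i < t)%N then u 0 i else 0).

Lemma Pf0 n (u : 'rV[rat]_n) : Pf u 0 = 0.
Proof. by rewrite /Pf big1. Qed.

Lemma PfS n (u : 'rV[rat]_n) (i : 'I_n) : u 0 i = Pf u i.+1 - Pf u i.
Proof.
rewrite /Pf -sumrB (bigD1 i) //= ltnSn ltnn subr0 big1 ?addr0 //.
move=> j hj; rewrite ltnS leq_eqVlt.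
have -> : (nat_of_ord j == i) = false by apply/negbTE.
by rewrite /= subrr.
Qed.

Lemma mulA_col n k (u : 'rV[rat]_n) (j : 'I_n) :
  (u *m Amat n k) 0 j =
  Pf u j + Pf u j.+1 - Pf u (j - k) - Pf u (minn n (j + k + 1)).
Proof.
rewrite mxE /Pf -big_split -!sumrB /=; apply: eq_bigr => i _.
have := ltn_ord i; have := ltn_ord j.
rewrite !mxE; do ![case: ifP => ? ] => ? ?; first [ ring | lia ].
Qed.


Lemma EqI k (u : 'rV[rat]_(3*k)) (hA : u *m Amat (3*k) k = 0) (j a b c d : nat) :
  (j < 3*k)%N -> a = j -> b = j.+1 -> c = (j - k)%N -> d = minn (3*k) (j+k+1) ->
  Pf u a + Pf u b = Pf u c + Pf u d.
Proof.
move=> hj -> -> -> ->.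
have := @mulA_col _ k u (Ordinal hj); rewrite hA mxE /= => h; lra.
Qed.

Lemma per k (u : 'rV[rat]_(3*k)) (hA : u *m Amat (3*k) k = 0) t :
  (t <= k)%N -> Pf u t = Pf u (t %% 4).
Proof.
have E := EqI hA; have P0 := Pf0 u.
elim/ltn_ind: t => t IH ht.
have [lt4|ge4] := ltnP t 4; first by rewrite modn_small.
have [p ht4] : exists p, t = (p + 4)%N by exists (t - 4)%N; lia.
subst t.
have -> : ((p + 4) %% 4 = p %% 4)%N by rewrite modnDr.
rewrite -IH; [|lia|lia].
have e1 : Pf u (2*k+p+3) + Pf u (2*k+p+4) = Pf u (k+p+3) + Pf u (3*k) by apply: (E ((2*k+p+3))%N); lia.
have e2 : Pf u (2*k+p+2) + Pf u (2*k+p+3) = Pf u (k+p+2) + Pf u (3*k) by apply: (E ((2*k+p+2))%N); lia.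
have e3 : Pf u (k+p+3) + Pf u (k+p+4) = Pf u (p+3) + Pf u (2*k+p+4) by apply: (E ((k+p+3))%N); lia.
have e4 : Pf u (k+p+1) + Pf u (k+p+2) = Pf u (p+1) + Pf u (2*k+p+2) by apply: (E ((k+p+1))%N); lia.
have e5 : Pf u (p+3) + Pf u (p+4) = Pf u 0 + Pf u (k+p+4) by apply: (E ((p+3))%N); lia.
have e6 : Pf u (p+2) + Pf u (p+3) = Pf u 0 + Pf u (k+p+3) by apply: (E ((p+2))%N); lia.
have e7 : Pf u (p+1) + Pf u (p+2) = Pf u 0 + Pf u (k+p+2) by apply: (E ((p+1))%N); lia.
have e8 : Pf u p + Pf u (p+1) = Pf u 0 + Pf u (k+p+1) by apply: (E (p)%N); lia.
lra.
Qed.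

Lemma bnd k (u : 'rV[rat]_(3*k)) (hA : u *m Amat (3*k) k = 0) :
  ((2 <= k)%N -> Pf u 1 = Pf u (k-2) /\ Pf u 2 = Pf u (k-1)) /\
  ((3 <= k)%N -> Pf u 3 = Pf u k).
Proof.
have E := EqI hA; have P0 := Pf0 u.
split; [move=> hk; split|move=> hk].
- have e1 : Pf u (2*k) + Pf u (2*k+1) = Pf u k + Pf u (3*k) by apply: (E ((2*k))%N); lia.
  have e2 : Pf u (2*k-1) + Pf u (2*k) = Pf u (k-1) + Pf u (3*k) by apply: (E ((2*k-1))%N); lia.
  have e3 : Pf u k + Pf u (k+1) = Pf u 0 + Pf u (2*k+1) by apply: (E (k)%N); lia.
  have e4 : Pf u (k-2) + Pf u (k-1) = Pf u 0 + Pf u (2*k-1) by apply: (E ((k-2))%N); lia.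
  have e5 : Pf u 0 + Pf u 1 = Pf u 0 + Pf u (k+1) by apply: (E (0)%N); lia.
  lra.
- have e1 : Pf u (2*k+1) + Pf u (2*k+2) = Pf u (k+1) + Pf u (3*k) by apply: (E ((2*k+1))%N); lia.
  have e2 : Pf u (2*k) + Pf u (2*k+1) = Pf u k + Pf u (3*k) by apply: (E ((2*k))%N); lia.
  have e3 : Pf u (k+1) + Pf u (k+2) = Pf u 1 + Pf u (2*k+2) by apply: (E ((k+1))%N); lia.
  have e4 : Pf u (k-1) + Pf u k = Pf u 0 + Pf u (2*k) by apply: (E ((k-1))%N); lia.
  have e5 : Pf u 1 + Pf u 2 = Pf u 0 + Pf u (k+2) by apply: (E (1)%N); lia.
  lra.
- have e1 : Pf u (2*k+2) + Pf u (2*k+3) = Pf u (k+2) + Pf u (3*k) by apply: (E ((2*k+2))%N); lia.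
  have e2 : Pf u (2*k+1) + Pf u (2*k+2) = Pf u (k+1) + Pf u (3*k) by apply: (E ((2*k+1))%N); lia.
  have e3 : Pf u (k+2) + Pf u (k+3) = Pf u 2 + Pf u (2*k+3) by apply: (E ((k+2))%N); lia.
  have e4 : Pf u k + Pf u (k+1) = Pf u 0 + Pf u (2*k+1) by apply: (E (k)%N); lia.
  have e5 : Pf u 2 + Pf u 3 = Pf u 0 + Pf u (k+3) by apply: (E (2)%N); lia.
  lra.
Qed.

Lemma kerZero k (u : 'rV[rat]_(3*k)) (hA : u *m Amat (3*k) k = 0) :
  (forall t, (t <= k)%N -> Pf u t = 0) -> u = 0.
Proof.
move=> H; have E := EqI hA; have P0 := Pf0 u.
have H2 : forall j, (j <= k)%N -> Pf u (k + j) = 0.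
  case=> [|j] hj; first by rewrite addn0 H.
  have e : Pf u j + Pf u j.+1 = Pf u 0 + Pf u (k + j.+1) by apply: (E (j)%N); lia.
  have h1 : Pf u j = 0 by apply: H; lia.
  have h2 : Pf u j.+1 = 0 by apply: H; lia.
  lra.
have H3 : forall j, (j <= k)%N -> Pf u (2*k + j) = 0.
  case=> [|j] hj; first by rewrite addn0 (_ : (2*k = k + k)%N) ?H2 //; lia.
  have e : Pf u (k+j) + Pf u (k+j).+1 = Pf u j + Pf u (2*k + j.+1) by apply: (E ((k+j))%N); lia.
  have h1 : Pf u j = 0 by apply: H; lia.
  have h2 : Pf u (k+j) = 0 by apply: H2; lia.
  have h3 : Pf u (k+j).+1 = 0 by rewrite -addnS; apply: H2; lia.
  lra.
have HP : forall t, (t <= 3*k)%N -> Pf u t = 0.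
  move=> t ht.
  have [h1|h1] := leqP t k; first exact: H.
  have [h2|h2] := leqP t (2*k).
    by rewrite (_ : t = k + (t - k))%N ?H2 //; lia.
  by rewrite (_ : t = 2*k + (t - 2*k))%N ?H3 //; lia.
apply/rowP => i; rewrite mxE PfS !HP ?subrr //; have := ltn_ord i; lia.
Qed.


Definition Pal k (al : nat -> rat) (t : nat) : rat :=
  al t + (if (k <= t)%N then al (t - k)%N else 0)
       + (if (2*k <= t)%N then al (t - 2*k)%N else 0).

Definition uvec k (al : nat -> rat) : 'rV[rat]_(3*k) :=
  \row_(i < 3*k) (Pal k al i.+1 - Pal k al i).

Lemma Pf_uvec k al t : (t <= 3*k)%N -> Pf (uvec k al) t = Pal k al t - Pal k al 0.
Proof.
elim: t => [|t IH] ht; first by rewrite Pf0 subrr.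
have ht' : (t < 3*k)%N by [].
have := PfS (uvec k al) (Ordinal ht'); rewrite mxE /= => h.
have := IH (ltnW ht); lra.
Qed.

Lemma PalA k al t : al 0 = 0 -> (1 <= k)%N -> (t <= k)%N -> Pal k al t = al t.
Proof.
move=> a0 hk ht; rewrite /Pal.
case: ifP => h1; case: ifP => h2; try lia.
- by rewrite (_ : (t - k = 0)%N) ?a0 ?addr0 //; lia.
- by rewrite !addr0.
Qed.

Lemma PalB k al m : al 0 = 0 -> (1 <= k)%N -> (m <= k)%N ->
  Pal k al (k + m) = al (k + m)%N + al m.
Proof.
move=> a0 hk ht; rewrite /Pal.
have e1 : (k + m - k = m)%N by lia.
rewrite e1.
case: ifP => h1; case: ifP => h2; try lia.
- have e2 : (k + m - 2*k = 0)%N by lia.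
  by rewrite e2 a0 addr0.
- by rewrite addr0.
Qed.

Lemma PalC k al m : al 0 = 0 -> (1 <= k)%N -> (m <= k)%N ->
  Pal k al (2*k + m) = al (2*k + m)%N + al (k + m)%N + al m.
Proof.
move=> a0 hk ht; rewrite /Pal.
have e1 : (2*k + m - k = k + m)%N by lia.
have e2 : (2*k + m - 2*k = m)%N by lia.
rewrite e1 e2.
case: ifP => h1; case: ifP => h2; try lia; done.
Qed.

Lemma Pal_eq k al (j : nat) : al 0 = 0 -> (1 <= k)%N ->
  (forall t, al (t + k + 1)%N = al t) ->
  (forall t, al t + al (t+1)%N + al (t+2)%N + al (t+3)%N = al 0%N + al 1%N + al 2%N + al 3%N) ->
  (j < 3*k)%N ->
  Pal k al j + Pal k al j.+1 = Pal k al (j - k) + Pal k al (minn (3*k) (j+k+1)).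
Proof.
move=> a0 hk H1 H2 hj.
have H1' : forall t s, s = (t + k + 1)%N -> al s = al t by move=> t s ->.
have P0 : Pal k al 0 = 0 by rewrite PalA.
have [hj1|hj1] := ltnP j k.
  have ea : (j - k = 0)%N by lia.
  have eb : minn (3*k) (j+k+1) = (k + j.+1)%N by lia.
  rewrite ea eb.
  have p1 : Pal k al j = al j by apply: PalA => //; lia.
  have p2 : Pal k al j.+1 = al j.+1 by apply: PalA => //; lia.
  have p3 : Pal k al (k + j.+1) = al (k + j.+1)%N + al j.+1 by apply: PalB => //; lia.
  rewrite P0 p1 p2 p3.
  have := H1' j (k + j.+1)%N ltac:(lia); lra.
have [hj2|hj2] := ltnP j (2*k).
  have [m ?] : exists m, j = (k + m)%N by exists (j - k)%N; lia.
  subst j.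
  have ea : (k + m - k = m)%N by lia.
  have eb : minn (3*k) (k+m+k+1) = (2*k + m.+1)%N by lia.
  rewrite ea eb.
  have p1 : Pal k al (k+m) = al (k+m)%N + al m by apply: PalB => //; lia.
  have p2 : Pal k al (k+m).+1 = al (k+m.+1)%N + al m.+1 by rewrite -addnS; apply: PalB => //; lia.
  have p3 : Pal k al m = al m by apply: PalA => //; lia.
  have p4 : Pal k al (2*k + m.+1) = al (2*k+m.+1)%N + al (k + m.+1)%N + al m.+1 by apply: PalC => //; lia.
  rewrite p1 p2 p3 p4.
  have := H1' (k+m)%N (2*k + m.+1)%N ltac:(lia); lra.
have [m ?] : exists m, j = (2*k + m)%N by exists (j - 2*k)%N; lia.
subst j.
have ea : (2*k + m - k = k + m)%N by lia.
have eb : minn (3*k) (2*k+m+k+1) = (2*k + k)%N by lia.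
rewrite ea eb.
have p1 : Pal k al (2*k+m) = al (2*k+m)%N + al (k+m)%N + al m by apply: PalC => //; lia.
have p2 : Pal k al (2*k+m).+1 = al (2*k+m.+1)%N + al (k+m.+1)%N + al m.+1 by rewrite -addnS; apply: PalC => //; lia.
have p3 : Pal k al (k+m) = al (k+m)%N + al m by apply: PalB => //; lia.
have p4 : Pal k al (2*k + k) = al (2*k+k)%N + al (k + k)%N + al k by apply: PalC => //; lia.
rewrite p1 p2 p3 p4.
have e1 := H2 (2*k+m)%N.
have e2 := H2 (3*k)%N.
have f1 := H1' (k+m+1)%N (2*k+m+2)%N ltac:(lia).
have f2 := H1' (k+m+2)%N (2*k+m+3)%N ltac:(lia).
have f3 := H1' (m+1)%N (k+m+2)%N ltac:(lia).
have f4 := H1' (m)%N (k+m.+1)%N ltac:(lia).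
have f5 := H1' (2*k)%N (3*k+1)%N ltac:(lia).
have f6 := H1' (2*k+1)%N (3*k+2)%N ltac:(lia).
have f7 := H1' k (2*k+1)%N ltac:(lia).
have f8 := H1' (2*k+2)%N (3*k+3)%N ltac:(lia).
have f9 := H1' (k+1)%N (2*k+2)%N ltac:(lia).
have f10 := H1' 0%N (k+1)%N ltac:(lia).
have g1 : al (2*k + m.+1)%N = al (2*k+m+1)%N by congr al; lia.
have g2 : al (2*k + k)%N = al (3*k)%N by congr al; lia.
have g3 : al (k + k)%N = al (2*k)%N by congr al; lia.
have g4 : al (m.+1)%N = al (m+1)%N by congr al; lia.
have g5 : al (k+m.+1)%N = al (k+m+1)%N by congr al; lia.
lra.
Qed.

Lemma uvec_ker k al : al 0 = 0 -> (1 <= k)%N ->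
  (forall t, al (t + k + 1)%N = al t) ->
  (forall t, al t + al (t+1)%N + al (t+2)%N + al (t+3)%N = al 0%N + al 1%N + al 2%N + al 3%N) ->
  uvec k al *m Amat (3*k) k = 0.
Proof.
move=> a0 hk H1 H2; apply/rowP => j; rewrite mulA_col mxE.
have hj := ltn_ord j.
rewrite !Pf_uvec; try lia.
have := Pal_eq a0 hk H1 H2 hj; lra.
Qed.


Definition Csel n d : 'M[rat]_(n, d) := \matrix_(i < n, l < d) ((i <= l)%N)%:R.

Lemma Csel_E n d (u : 'rV[rat]_n) (l : 'I_d) : (u *m Csel n d) 0 l = Pf u l.+1.
Proof.
rewrite mxE /Pf; apply: eq_bigr => i _; rewrite mxE ltnS.
by case: ifP => _; rewrite ?mulr1 ?mulr0.
Qed.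

Lemma rank_ker_le n d (A : 'M[rat]_n) :
  (forall u : 'rV[rat]_n, u *m A = 0 -> u *m Csel n d = 0 -> u = 0) ->
  (\rank (kermx A) <= d)%N.
Proof.
move=> H; rewrite -(mxrank_mul_ker (kermx A) (Csel n d)).
have -> : \rank (kermx A :&: kermx (Csel n d))%MS = 0%N.
  apply/eqP; rewrite mxrank_eq0; apply/eqP/row_matrixP => i; rewrite row0.
  apply: H; apply/sub_kermxP; apply: submx_trans (row_sub i _) _.
    exact: capmxSl.
  exact: capmxSr.
by rewrite addn0 rank_leq_col.
Qed.

Lemma rank_ker_ge n d (A : 'M[rat]_n) (K : 'M[rat]_(d, n)) :
  K *m A = 0 -> K *m Csel n d = 1%:M -> (d <= \rank (kermx A))%N.
Proof.
move=> hKA hKC.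
have h1 : (K <= kermx A)%MS by apply/sub_kermxP.
apply: leq_trans (mxrankS h1).
by rewrite -{1}(mxrank1 rat d) -hKC mxrankM_maxl.
Qed.

Lemma zero_gen k (u : 'rV[rat]_(3*k)) (hA : u *m Amat (3*k) k = 0) :
  (forall t, (t <= 3)%N -> (t <= k)%N -> Pf u t = 0) -> u = 0.
Proof.
move=> H; apply: (kerZero hA) => t ht.
rewrite (per hA ht); apply: H; lia.
Qed.

Lemma small_even k (u : 'rV[rat]_(3*k)) (hA : u *m Amat (3*k) k = 0) :
  (1 <= k)%N -> ~~ odd k -> u = 0.
Proof.
move=> hk hodd; apply: (zero_gen hA).
have [F0 F2] := bnd hA.
have P0 := Pf0 u.
have k2 : (2 <= k)%N.
  have : k != 1%N by apply: contraNneq hodd => ->.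
  lia.
have [e|e] : (k %% 4 = 0 \/ k %% 4 = 2)%N.
  have : (k %% 2 = 0)%N by rewrite modn2; case: (odd k) hodd.
  lia.
- have k4 : (4 <= k)%N by lia.
  have a3 : Pf u 3 = 0.
    rewrite (F2 ltac:(lia)) (per hA (leqnn k)).
    by have -> : (k %% 4 = 0)%N by lia.
  have a2 : Pf u 2 = 0.
    rewrite (proj2 (F0 k2)) (per hA (_ : (k-1 <= k)%N)); last lia.
    by have -> : ((k-1) %% 4 = 3)%N by lia.
  have a1 : Pf u 1 = 0.
    rewrite (proj1 (F0 k2)) (per hA (_ : (k-2 <= k)%N)); last lia.
    by have -> : ((k-2) %% 4 = 2)%N by lia.
  move=> t ht _; case: t ht => [|[|[|[|]]]] //.
- have a1 : Pf u 1 = 0.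
    rewrite (proj1 (F0 k2)) (per hA (_ : (k-2 <= k)%N)); last lia.
    by have -> : ((k-2) %% 4 = 0)%N by lia.
  have a2 : Pf u 2 = 0.
    rewrite (proj2 (F0 k2)) (per hA (_ : (k-1 <= k)%N)); last lia.
    by have -> : ((k-1) %% 4 = 1)%N by lia.
  move=> t ht htk; case: t ht htk => [|[|[|[|]]]] // _ h3.
  rewrite (F2 h3) (per hA (leqnn k)).
  by have -> : (k %% 4 = 2)%N by lia.
Qed.


Lemma small_1 k (u : 'rV[rat]_(3*k)) (hA : u *m Amat (3*k) k = 0) :
  (k %% 4 = 1)%N -> Pf u 1 = 0 -> u = 0.
Proof.
move=> e a1; apply: (zero_gen hA).
have [F0 F2] := bnd hA.
move=> [|[|[|[|t]]]] ht h2; [exact: Pf0|exact: a1| | |exfalso; lia].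
- rewrite (proj2 (F0 h2)) (per hA (_ : (k-1 <= k)%N)); last lia.
  have -> : ((k-1) %% 4 = 0)%N by lia.
  exact: Pf0.
- rewrite (F2 h2) (per hA (leqnn k)).
  by have -> : (k %% 4 = 1)%N by lia.
Qed.

Lemma small_3 k (u : 'rV[rat]_(3*k)) (hA : u *m Amat (3*k) k = 0) :
  Pf u 1 = 0 -> Pf u 2 = 0 -> Pf u 3 = 0 -> u = 0.
Proof.
move=> a1 a2 a3; apply: (zero_gen hA).
move=> [|[|[|[|t]]]] ht h2; [exact: Pf0|exact: a1|exact: a2|exact: a3|exfalso; lia].
Qed.

Lemma H2gen (f : nat -> rat) t :
  f (t %% 4)%N + f ((t+1) %% 4)%N + f ((t+2) %% 4)%N + f ((t+3) %% 4)%N =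
  f (0 %% 4)%N + f (1 %% 4)%N + f (2 %% 4)%N + f (3 %% 4)%N.
Proof.
have : (t %% 4 < 4)%N by rewrite ltn_mod.
case e: (t %% 4)%N => [|[|[|[|q]]]] // _.
- have -> : ((t+1) %% 4 = 1)%N by lia.
  have -> : ((t+2) %% 4 = 2)%N by lia.
  have -> : ((t+3) %% 4 = 3)%N by lia.
  by [].
- have -> : ((t+1) %% 4 = 2)%N by lia.
  have -> : ((t+2) %% 4 = 3)%N by lia.
  have -> : ((t+3) %% 4 = 0)%N by lia.
  rewrite /=; lra.
- have -> : ((t+1) %% 4 = 3)%N by lia.
  have -> : ((t+2) %% 4 = 0)%N by lia.
  have -> : ((t+3) %% 4 = 1)%N by lia.
  rewrite /=; lra.
- have -> : ((t+1) %% 4 = 0)%N by lia.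
  have -> : ((t+2) %% 4 = 1)%N by lia.
  have -> : ((t+3) %% 4 = 2)%N by lia.
  rewrite /=; lra.
Qed.

Definition alodd (t : nat) : rat := (odd t)%:R.

Lemma alodd_ker k : (k %% 4 = 1)%N -> uvec k alodd *m Amat (3*k) k = 0.
Proof.
move=> e; apply: uvec_ker => //; first lia.
- move=> t; rewrite /alodd.
  have -> : (t + k + 1 = t + 2 * ((k+1) %/ 2))%N by lia.
  by rewrite oddD oddM /= addbF.
- move=> t; rewrite /alodd !oddD /=; case: (odd t) => /=; lra.
Qed.

Definition al3 (r : nat) (t : nat) : rat := ((t %% 4)%N == r.+1)%:R.

Lemma al3_ker k r : (k %% 4 = 3)%N -> uvec k (al3 r) *m Amat (3*k) k = 0.
Proof.
move=> e; apply: uvec_ker => //; first lia.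
- move=> t; rewrite /al3.
  by have -> : ((t + k + 1) %% 4 = t %% 4)%N by lia.
- move=> t; exact: (H2gen (fun x => (x == r.+1)%:R)).
Qed.

Lemma Pf_uvec1 k al t : al 0%N = 0 -> (1 <= k)%N -> (t <= k)%N ->
  Pf (uvec k al) t = al t.
Proof.
move=> a0 hk ht; rewrite Pf_uvec; last lia.
rewrite (@PalA k al t) // (@PalA k al 0) //; lra.
Qed.

Theorem theorem8p9 (k : nat) (hk : (1 <= k)%N) :
  (~~ odd k -> Nnull (3 * k) k = 0%N) /\
  (k %% 4 = 1 -> Nnull (3 * k) k = 1%N)%N /\
  (k %% 4 = 3 -> Nnull (3 * k) k = 3%N)%N.
Proof.
rewrite /Nnull -mxrank_ker; split; [|split].
- move=> hodd; apply/eqP; rewrite -leqn0.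
  apply: (@rank_ker_le _ 0) => u hA _; exact: small_even.
- move=> e; apply/eqP; rewrite eqn_leq; apply/andP; split.
  + apply: (@rank_ker_le _ 1) => u hA hC; apply: (small_1 hA e).
    by have := Csel_E u (0 : 'I_1); rewrite hC mxE.
  + apply: (@rank_ker_ge _ 1 _ (uvec k alodd)); first exact: alodd_ker.
    apply/matrixP => i j; rewrite !ord1 Csel_E Pf_uvec1 //.
    by rewrite mxE.
- move=> e; apply/eqP; rewrite eqn_leq; apply/andP; split.
  + apply: (@rank_ker_le _ 3) => u hA hC; apply: (small_3 hA).
    * by have := Csel_E u (0 : 'I_3); rewrite hC mxE.
    * by have := Csel_E u (1 : 'I_3); rewrite hC mxE.
    * by have := Csel_E u (2 : 'I_3); rewrite hC mxE.
  + apply: (@rank_ker_ge _ 3 _ (\matrix_(r < 3) uvec k (al3 r))).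
      apply/row_matrixP => r; rewrite row_mul rowK row0; exact: al3_ker.
    apply/matrixP => r l.
    have -> : ((\matrix_(r < 3) uvec k (al3 r)) *m Csel (3*k) 3) r l
            = (row r ((\matrix_(r < 3) uvec k (al3 r)) *m Csel (3*k) 3)) 0 l by rewrite [RHS]mxE.
    rewrite row_mul rowK Csel_E Pf_uvec1 //; try lia.
    rewrite /al3 !mxE.
    case: r => [[|[|[|r]]] hr] //; case: l => [[|[|[|l]]] hl] //.
    by have := ltn_ord l; lia.
Qed.
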